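(* Let $a,b\in\mathbb{C}$ be such that $X=X_{a,b}$ is smooth. If $a^2-ab+b^2\neq0$, then neither $\pi_x$ nor $\pi_y$ contracts any curve. If $a\neq b$, then $\pi_z$ contracts no curve.
   Context: $X_{a,b}\subset\mathbb{P}^1_x\times\mathbb{P}^1_y\times\mathbb{P}^1_z$ is the surface defined by $Q_a z_0^2+(x_0^2y_0^2+x_1^2y_1^2)z_0z_1+Q_b z_1^2=0$ with $Q_c=x_0^2y_1^2+c\,x_0x_1y_0y_1+x_1^2y_0^2$. $\pi_x:X\to\mathbb{P}^1_y\times\mathbb{P}^1_z$, $\pi_y:X\to\mathbb{P}^1_x\times\mathbb{P}^1_z$, $\pi_z:X\to\mathbb{P}^1_x\times\mathbb{P}^1_y$ are the restrictions of the projections. *)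

(* Defs.v *)
From HB Require Import structures.
From mathcomp Require Import all_boot all_order all_algebra.
From mathcomp Require Import complex.
From mathcomp Require Import Rstruct.
Set Implicit Arguments. Unset Strict Implicit. Unset Printing Implicit Defensive.
Import Order.TTheory GRing.Theory Num.Theory.
Local Open Scope ring_scope.

Notation CC := (complex Rdefinitions.R).

Definition Qc (K : comNzRingType) (c x0 x1 y0 y1 : K) : K :=
  x0 ^+ 2 * y1 ^+ 2 + c * x0 * x1 * y0 * y1 + x1 ^+ 2 * y0 ^+ 2.

Definition Fab (K : comNzRingType) (a b x0 x1 y0 y1 z0 z1 : K) : K :=
  Qc a x0 x1 y0 y1 * z0 ^+ 2
  + (x0 ^+ 2 * y0 ^+ 2 + x1 ^+ 2 * y1 ^+ 2) * z0 * z1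
  + Qc b x0 x1 y0 y1 * z1 ^+ 2.

(* A point of P^1(C) is represented by a nonzero pair of homogeneous coordinates;
   two representatives give the same point iff they are proportional. *)
Definition nz (p : CC * CC) : Prop := p <> (0, 0).
Definition proportional (p q : CC * CC) : Prop := p.1 * q.2 = p.2 * q.1.

Definition onX (a b : CC) (x y z : CC * CC) : Prop :=
  nz x /\ nz y /\ nz z /\ Fab a b x.1 x.2 y.1 y.2 z.1 z.2 = 0.

(* Formal partial derivatives of F (computed via univariate formal
   derivatives, the other variables being treated as constants). *)
Definition cP (t : CC) : {poly CC} := t%:P.
Definition dF_x0 (a b x0 x1 y0 y1 z0 z1 : CC) : CC :=
  (Fab (cP a) (cP b) 'X (cP x1) (cP y0) (cP y1) (cP z0) (cP z1))^`().[x0].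
Definition dF_x1 (a b x0 x1 y0 y1 z0 z1 : CC) : CC :=
  (Fab (cP a) (cP b) (cP x0) 'X (cP y0) (cP y1) (cP z0) (cP z1))^`().[x1].
Definition dF_y0 (a b x0 x1 y0 y1 z0 z1 : CC) : CC :=
  (Fab (cP a) (cP b) (cP x0) (cP x1) 'X (cP y1) (cP z0) (cP z1))^`().[y0].
Definition dF_y1 (a b x0 x1 y0 y1 z0 z1 : CC) : CC :=
  (Fab (cP a) (cP b) (cP x0) (cP x1) (cP y0) 'X (cP z0) (cP z1))^`().[y1].
Definition dF_z0 (a b x0 x1 y0 y1 z0 z1 : CC) : CC :=
  (Fab (cP a) (cP b) (cP x0) (cP x1) (cP y0) (cP y1) 'X (cP z1))^`().[z0].
Definition dF_z1 (a b x0 x1 y0 y1 z0 z1 : CC) : CC :=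
  (Fab (cP a) (cP b) (cP x0) (cP x1) (cP y0) (cP y1) (cP z0) 'X)^`().[z1].

(* X_{a,b} is smooth: at every point of X some partial derivative of F is
   nonzero (Jacobian criterion for a hypersurface in (P^1)^3; by the Euler
   relations this is equivalent to the affine-chart criterion). *)
Definition smooth (a b : CC) : Prop :=
  forall x y z : CC * CC, onX a b x y z ->
    let: (x0, x1) := x in let: (y0, y1) := y in let: (z0, z1) := z in
    ~ (dF_x0 a b x0 x1 y0 y1 z0 z1 = 0 /\ dF_x1 a b x0 x1 y0 y1 z0 z1 = 0 /\
       dF_y0 a b x0 x1 y0 y1 z0 z1 = 0 /\ dF_y1 a b x0 x1 y0 y1 z0 z1 = 0 /\
       dF_z0 a b x0 x1 y0 y1 z0 z1 = 0 /\ dF_z1 a b x0 x1 y0 y1 z0 z1 = 0).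

(* A fiber "contains infinitely many distinct points of P^1": an injective
   (up to proportionality) sequence of representatives. *)
Definition infinite_P1 (P : CC * CC -> Prop) : Prop :=
  exists s : nat -> CC * CC,
    (forall n, nz (s n) /\ P (s n)) /\
    (forall m n, m <> n -> ~ proportional (s m) (s n)).

(* pi contracts a curve  <=>  some fiber of pi (a closed subset of X) is
   positive-dimensional  <=>  some fiber is infinite. *)
Definition contracts_x (a b : CC) : Prop :=
  exists y z, nz y /\ nz z /\ infinite_P1 (fun x => onX a b x y z).
Definition contracts_y (a b : CC) : Prop :=
  exists x z, nz x /\ nz z /\ infinite_P1 (fun y => onX a b x y z).
Definition contracts_z (a b : CC) : Prop :=
  exists x y, nz x /\ nz y /\ infinite_P1 (fun z => onX a b x y z).

(* Main.v *)
Require Import Defs.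
From HB Require Import structures.
From mathcomp Require Import all_boot all_order all_algebra.
From mathcomp Require Import complex Rstruct.
From mathcomp Require Import ring.
Import Order.TTheory GRing.Theory Num.Theory.
Local Open Scope ring_scope.

Set Implicit Arguments. Unset Strict Implicit. Unset Printing Implicit Defensive.
Lemma quad_zero (K : idomainType) (A B C p1 p2 q1 q2 r1 r2 : K) :
  p1 * q2 - p2 * q1 != 0 -> q1 * r2 - q2 * r1 != 0 -> r1 * p2 - r2 * p1 != 0 ->
  A * p1 ^+ 2 + B * p1 * p2 + C * p2 ^+ 2 = 0 ->
  A * q1 ^+ 2 + B * q1 * q2 + C * q2 ^+ 2 = 0 ->
  A * r1 ^+ 2 + B * r1 * r2 + C * r2 ^+ 2 = 0 ->
  [/\ A = 0, B = 0 & C = 0].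
Proof.
move=> h1 h2 h3 e1 e2 e3.
set D := (p1 * q2 - p2 * q1) * (q1 * r2 - q2 * r1) * (r1 * p2 - r2 * p1).
have hD : D != 0 by rewrite /D !mulf_neq0.
pose a1 : K := p1^+2.
pose b1 : K := p1 * p2.
pose c1 : K := p2^+2.
pose a2 : K := q1^+2.
pose b2 : K := q1 * q2.
pose c2 : K := q2^+2.
pose a3 : K := r1^+2.
pose b3 : K := r1 * r2.
pose c3 : K := r2^+2.
have eA : A * D = - ((b2 * c3 - b3 * c2) * (A * p1 ^+ 2 + B * p1 * p2 + C * p2 ^+ 2)
   + (b3 * c1 - b1 * c3) * (A * q1 ^+ 2 + B * q1 * q2 + C * q2 ^+ 2)
   + (b1 * c2 - b2 * c1) * (A * r1 ^+ 2 + B * r1 * r2 + C * r2 ^+ 2)).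
  by rewrite /D /a1 /b1 /c1 /a2 /b2 /c2 /a3 /b3 /c3; ring.
have eB : B * D = - ((c2 * a3 - c3 * a2) * (A * p1 ^+ 2 + B * p1 * p2 + C * p2 ^+ 2)
   + (c3 * a1 - c1 * a3) * (A * q1 ^+ 2 + B * q1 * q2 + C * q2 ^+ 2)
   + (c1 * a2 - c2 * a1) * (A * r1 ^+ 2 + B * r1 * r2 + C * r2 ^+ 2)).
  by rewrite /D /a1 /b1 /c1 /a2 /b2 /c2 /a3 /b3 /c3; ring.
have eC : C * D = - ((a2 * b3 - a3 * b2) * (A * p1 ^+ 2 + B * p1 * p2 + C * p2 ^+ 2)
   + (a3 * b1 - a1 * b3) * (A * q1 ^+ 2 + B * q1 * q2 + C * q2 ^+ 2)
   + (a1 * b2 - a2 * b1) * (A * r1 ^+ 2 + B * r1 * r2 + C * r2 ^+ 2)).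
  by rewrite /D /a1 /b1 /c1 /a2 /b2 /c2 /a3 /b3 /c3; ring.
rewrite e1 e2 e3 !mulr0 !addr0 oppr0 in eA eB eC.
split; apply/eqP; move: hD; [move: eA|move: eB|move: eC];
  by move/eqP; rewrite mulf_eq0 => /orP[]// /eqP->; rewrite eqxx.
Qed.

Lemma zl (K : idomainType) (x y : K) : x * y = 0 -> y != 0 -> x = 0.
Proof. by move/eqP; rewrite mulf_eq0 => /orP[/eqP|/eqP->]//; rewrite eqxx. Qed.

Lemma sq0 (K : idomainType) (x : K) : x ^+ 2 = 0 -> x = 0.
Proof. by move/eqP; rewrite expf_eq0 /= => /eqP. Qed.

Lemma npair (p : CC * CC) : nz p -> p.1 = 0 -> p.2 = 0 -> False.
Proof. by case: p => p1 p2 /= h e1 e2; apply: h; rewrite e1 e2. Qed.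

Lemma infinite_quad (A B C : CC) (P : CC * CC -> Prop) :
  infinite_P1 P ->
  (forall t, P t -> A * t.1 ^+ 2 + B * t.1 * t.2 + C * t.2 ^+ 2 = 0) ->
  [/\ A = 0, B = 0 & C = 0].
Proof.
move=> [s [hs hne]] hq.
have np : forall m n, m <> n -> (s m).1 * (s n).2 - (s m).2 * (s n).1 != 0.
  by move=> m n mn; rewrite subr_eq0; apply/eqP; apply: hne.
have h01 : (0 <> 1)%N by []. have h12 : (1 <> 2)%N by []. have h20 : (2 <> 0)%N by [].
have := quad_zero (np _ _ h01) (np _ _ h12) (np _ _ h20).
apply; apply: hq; exact: (hs _).2.
Qed.

Lemma zs (z0 z1 : CC) : z0 ^+ 2 + z1 ^+ 2 = 0 -> z0 * z1 = 0 -> z0 = 0 /\ z1 = 0.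
Proof.
move=> hs hw.
have h0 : z0 = 0.
  apply: (@sq0 _ z0); apply: sq0.
  have -> : (z0 ^+ 2) ^+ 2 = z0 ^+ 2 * (z0 ^+ 2 + z1 ^+ 2) - (z0 * z1) ^+ 2 by ring.
  by rewrite hs hw; ring.
split => //; apply: sq0; by rewrite -hs h0; ring.
Qed.

Lemma x_part (a b : CC) (y z : CC * CC) :
  a ^+ 2 - a * b + b ^+ 2 != 0 -> nz y -> nz z ->
  y.2 ^+ 2 * z.1 ^+ 2 + y.1 ^+ 2 * z.1 * z.2 + y.2 ^+ 2 * z.2 ^+ 2 = 0 ->
  y.1 * y.2 * (a * z.1 ^+ 2 + b * z.2 ^+ 2) = 0 ->
  y.1 ^+ 2 * z.1 ^+ 2 + y.2 ^+ 2 * z.1 * z.2 + y.1 ^+ 2 * z.2 ^+ 2 = 0 ->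
  False.
Proof.
case: y => y0 y1; case: z => z0 z1 /= hab hy hz hP hM hN.
have zz : z0 ^+ 2 + z1 ^+ 2 = 0 -> z0 * z1 = 0 -> False.
  by move=> h1 h2; have [e1 e2] := zs h1 h2; exact: (npair hz).
have [y00|y0n] := eqVneq y0 0.
  have y1n : y1 != 0 by apply/eqP => e; exact: (npair hy).
  apply: zz.
    apply: (@zl _ _ (y1 ^+ 2)); last by rewrite expf_neq0.
    by rewrite -hP y00; ring.
  apply: (@zl _ _ (y1 ^+ 2)); last by rewrite expf_neq0.
  by rewrite -hN y00; ring.
have [y10|y1n] := eqVneq y1 0.
  apply: zz.
    apply: (@zl _ _ (y0 ^+ 2)); last by rewrite expf_neq0.
    by rewrite -hN y10; ring.
  apply: (@zl _ _ (y0 ^+ 2)); last by rewrite expf_neq0.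
  by rewrite -hP y10; ring.
have hE : a * z0 ^+ 2 + b * z1 ^+ 2 = 0.
  by apply: (zl (y := y0 * y1)); [rewrite mulrC | rewrite mulf_neq0].
have hsw : (z0 ^+ 2 + z1 ^+ 2) ^+ 2 - (z0 * z1) ^+ 2 = 0.
  apply: (zl (y := y0 ^+ 2 * y1 ^+ 2)); last by rewrite mulf_neq0 // expf_neq0.
  have -> : ((z0 ^+ 2 + z1 ^+ 2) ^+ 2 - (z0 * z1) ^+ 2) * (y0 ^+ 2 * y1 ^+ 2) =
    (y1 ^+ 2 * z0 ^+ 2 + y0 ^+ 2 * z0 * z1 + y1 ^+ 2 * z1 ^+ 2) * (y0 ^+ 2 * (z0 ^+ 2 + z1 ^+ 2))
    - y0 ^+ 2 * (z0 * z1) * (y0 ^+ 2 * z0 ^+ 2 + y1 ^+ 2 * z0 * z1 + y0 ^+ 2 * z1 ^+ 2) by ring.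
  by rewrite hP hN; ring.
have [z10|z1n] := eqVneq z1 0.
  apply: (npair hz) => //=.
  apply: sq0; apply: (@zl _ _ (y1 ^+ 2)); last by rewrite expf_neq0.
  by rewrite -hP z10; ring.
move/eqP: hab; apply.
apply: (zl (y := z1 ^+ 4)); last by rewrite expf_neq0.
have -> : (a ^+ 2 - a * b + b ^+ 2) * z1 ^+ 4 =
  a ^+ 2 * ((z0 ^+ 2 + z1 ^+ 2) ^+ 2 - (z0 * z1) ^+ 2)
  + (b * z1 ^+ 2 - a * z0 ^+ 2 - a * z1 ^+ 2) * (a * z0 ^+ 2 + b * z1 ^+ 2) by ring.
by rewrite hsw hE; ring.
Qed.

Lemma z_part (a b : CC) (x y : CC * CC) :
  a != b -> nz x -> nz y ->
  Qc a x.1 x.2 y.1 y.2 = 0 ->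
  x.1 ^+ 2 * y.1 ^+ 2 + x.2 ^+ 2 * y.2 ^+ 2 = 0 ->
  Qc b x.1 x.2 y.1 y.2 = 0 -> False.
Proof.
case: x => x0 x1; case: y => y0 y1 /= hab hx hy hA hB hC.
have hp : x0 * x1 * y0 * y1 = 0.
  apply: (zl (y := a - b)); last by rewrite subr_eq0.
  have -> : x0 * x1 * y0 * y1 * (a - b) = Qc a x0 x1 y0 y1 - Qc b x0 x1 y0 y1
    by rewrite /Qc; ring.
  by rewrite hA hC subr0.
have gen : forall u0 u1 v0 v1 : CC, nz (u0, u1) -> nz (v0, v1) -> u0 = 0 ->
   u1 ^+ 2 * v0 ^+ 2 = 0 -> u1 ^+ 2 * v1 ^+ 2 = 0 -> False.
  move=> u0 u1 v0 v1 hu hv e0 e1 e2.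
  have u1n : u1 != 0 by apply/eqP => e; exact: (npair hu).
  apply: (npair hv) => /=; apply: sq0; apply: (zl (y := u1 ^+ 2));
    by rewrite ?expf_neq0 // mulrC.
move/eqP: hp; rewrite !mulf_eq0 => /orP[/orP[/orP[]|]|] /eqP e.
- apply: (gen x0 x1 y0 y1) => //.
    by rewrite -hA /Qc e; ring.
  by rewrite -hB e; ring.
- apply: (gen x1 x0 y1 y0) => //.
  + by move=> [e1 e2]; apply: hx; rewrite e1 e2.
  + by move=> [e1 e2]; apply: hy; rewrite e1 e2.
  + by rewrite -hA /Qc e; ring.
  by rewrite -hB e; ring.
- apply: (gen y0 y1 x0 x1) => //.
    by rewrite -hA /Qc e; ring.
  by rewrite -hB e; ring.
- apply: (gen y1 y0 x1 x0) => //.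
  + by move=> [e1 e2]; apply: hy; rewrite e1 e2.
  + by move=> [e1 e2]; apply: hx; rewrite e1 e2.
  + by rewrite -hA /Qc e; ring.
  by rewrite -hB e; ring.
Qed.

Theorem lemma4p2 (a b : CC) :
  smooth a b ->
  (a ^+ 2 - a * b + b ^+ 2 != 0 -> ~ contracts_x a b /\ ~ contracts_y a b) /\
  (a != b -> ~ contracts_z a b).
Proof.
move=> _; split.
  move=> hab; split.
    move=> [y [z [hy [hz hinf]]]].
    have [|hP hM hN] := infinite_quad (A := y.2 ^+ 2 * z.1 ^+ 2 + y.1 ^+ 2 * z.1 * z.2 + y.2 ^+ 2 * z.2 ^+ 2) (B := y.1 * y.2 * (a * z.1 ^+ 2 + b * z.2 ^+ 2)) (C := y.1 ^+ 2 * z.1 ^+ 2 + y.2 ^+ 2 * z.1 * z.2 + y.1 ^+ 2 * z.2 ^+ 2) hinf.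
      by move=> t [_ [_ [_ hF]]]; rewrite -hF /Fab /Qc; ring.
    exact: (x_part hab hy hz hP hM hN).
  move=> [x [z [hx [hz hinf]]]].
  have [|hP hM hN] := infinite_quad (A := x.2 ^+ 2 * z.1 ^+ 2 + x.1 ^+ 2 * z.1 * z.2 + x.2 ^+ 2 * z.2 ^+ 2) (B := x.1 * x.2 * (a * z.1 ^+ 2 + b * z.2 ^+ 2)) (C := x.1 ^+ 2 * z.1 ^+ 2 + x.2 ^+ 2 * z.1 * z.2 + x.1 ^+ 2 * z.2 ^+ 2) hinf.
    by move=> t [_ [_ [_ hF]]]; rewrite -hF /Fab /Qc; ring.
  exact: (x_part hab hx hz hP hM hN).
move=> hab [x [y [hx [hy hinf]]]].
have [|hA hB hC] := infinite_quad (A := Qc a x.1 x.2 y.1 y.2) (B := x.1 ^+ 2 * y.1 ^+ 2 + x.2 ^+ 2 * y.2 ^+ 2) (C := Qc b x.1 x.2 y.1 y.2) hinf.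
  by move=> t [_ [_ [_ hF]]]; rewrite -hF /Fab /Qc; ring.
exact: (z_part hab hx hy hA hB hC).
Qed.
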